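(* Let $\mathcal{M}=(a_1^*,\dots,a_L^* )$ be a route with $a_1^*=1$ in which, for each $1\le k<L$, node $a_{k+1}^*$ is a nearest neighbor with respect to $(a_1^*,\dots,a_k^* )$. Let $K\ge1$ and let $b_1,\dots,b_K$ be distinct nodes not in $\mathcal{M}$, where $b_1$ is not a nearest neighbor with respect to $\mathcal{M}$. Let $\mathcal{M}_1=(a_1^*,\dots,a_L^*,b_1,\dots,b_K)$. Assume a nearest neighbor $a_{L+1}^*$ with respect to $\mathcal{M}$ exists. Define $\mathcal{M}_2$ as follows: - if $a_{L+1}^*\notin\{b_1,\dots,b_{K-1}\}$, then $\mathcal{M}_2=(a_1^*,\dots,a_L^*,a_{L+1}^*,b_1,\dots,b_{K-1})$; - if $a_{L+1}^*=b_k$ for some $k\in\{1,\dots,K-1\}$, then $\mathcal{M}_2=(a_1^*,\dots,a_L^*,a_{L+1}^*,b_1,\dots,b_{k-1},b_{k+1},\dots,b_K)$. Then $R_{\mathrm{DF}}(\mathcal{M}_2)\ge R_{\mathrm{DF}}(\mathcal{M}_1)$.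
   Context: Network: a finite set of nodes $\mathcal{S}=\{1,2,\dots,D\}$, $D\ge 2$. Node $1$ is the source and node $D$ is the destination. Received powers: for distinct nodes $i,t$, the power received at $t$ from $i$ is a positive real number $P_{it}$. All receivers have the same noise power $N>0$. Routes: a route is an ordered tuple of distinct nodes $\mathcal{M}=(m_1,\dots,m_L)$ with $m_1=1$ and $L\ge1$. DF with independent codewords: the reception rate of node $m_t$ ($2\le t\le L$) in route $\mathcal{M}$ is $$R_{m_t}(\mathcal{M})=\tfrac12\log\Big(1+N^{-1}\sum_{i=1}^{t-1}P_{m_i m_t}\Big).$$ The supported DF rate (for $L\ge2$) is $R_{\mathrm{DF}}(\mathcal{M})=\min_{2\le t\le L}R_{m_t}(\mathcal{M})$. Nearest neighbor: node $i\notin\mathcal{M}$ is a nearest neighbor with respect to route $\mathcal{M}$ iff $P_{mi}\ge P_{mj}$ for all $m\in\mathcal{M}$ and all $j\in\mathcal{S}\setminus(\mathcal{M}\cup\{i\})$. *)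

(* Defs.v *)
From Stdlib Require Import Reals List Arith.
Import ListNotations.
Open Scope R_scope.

Definition in_S (D : nat) (i : nat) : Prop := (1 <= i <= D)%nat.

Definition recv_power (P : nat -> nat -> R) (pre : list nat) (x : nat) : R :=
  fold_right (fun m acc => P m x + acc) 0 pre.

Definition recv_rate (P : nat -> nat -> R) (N : R) (pre : list nat) (x : nat) : R :=
  / 2 * ln (1 + / N * recv_power P pre x).

Fixpoint recv_rates (P : nat -> nat -> R) (N : R) (pre rest : list nat) : list R :=
  match rest with
  | [] => []
  | x :: rest' => recv_rate P N pre x :: recv_rates P N (pre ++ [x]) rest'
  end.

(* Minimum of a nonempty list (value on [] is irrelevant). *)
Fixpoint list_min (l : list R) : R :=
  match l with
  | [] => 0
  | [x] => x
  | x :: l' => Rmin x (list_min l')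
  end.

(* DF rate of a route (meaningful for routes with at least 2 nodes):
   min over t = 2..L of R_{m_t}. *)
Definition R_DF (P : nat -> nat -> R) (N : R) (M : list nat) : R :=
  match M with
  | [] => 0
  | m1 :: rest => list_min (recv_rates P N [m1] rest)
  end.

Definition nearest_neighbor (D : nat) (P : nat -> nat -> R) (M : list nat) (i : nat) : Prop :=
  in_S D i /\ ~ In i M /\
  forall m j, In m M -> in_S D j -> ~ In j M -> j <> i -> P m i >= P m j.

(* Main.v *)
Require Import Defs.
From Stdlib Require Import Reals List Arith Lra Lia Permutation.
Import ListNotations.
Open Scope R_scope.

Lemma list_min_cons_le (y : R) (l : list R) : list_min (y :: l) <= y.
Proof. destruct l; simpl. lra. apply Rmin_l. Qed.

Lemma list_min_cons_tl (y z : R) (l : list R) : list_min (y :: z :: l) <= list_min (z :: l).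
Proof. change (Rmin y (list_min (z :: l)) <= list_min (z :: l)). apply Rmin_r. Qed.

Lemma rates_min_le P N : forall l1 pre x l2,
  list_min (recv_rates P N pre (l1 ++ x :: l2)) <= recv_rate P N (pre ++ l1) x.
Proof.
  induction l1 as [|y l1 IH]; intros pre x l2.
  - simpl. rewrite app_nil_r. apply list_min_cons_le.
  - simpl. destruct (l1 ++ x :: l2) eqn:E.
    + destruct l1; discriminate.
    + simpl recv_rates. eapply Rle_trans. apply list_min_cons_tl.
      specialize (IH (pre ++ [y]) x l2). rewrite E in IH. simpl recv_rates in IH.
      replace (pre ++ y :: l1) with ((pre ++ [y]) ++ l1) by (rewrite <- app_assoc; reflexivity).
      exact IH.
Qed.

Lemma rates_min_ge P N : forall rest pre v, rest <> [] ->
  (forall l1 x l2, rest = l1 ++ x :: l2 -> v <= recv_rate P N (pre ++ l1) x) ->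
  v <= list_min (recv_rates P N pre rest).
Proof.
  induction rest as [|x r IH]; intros pre v Hne H. congruence.
  destruct r as [|z r].
  - simpl. specialize (H [] x []). rewrite app_nil_r in H. apply H; reflexivity.
  - change (v <= Rmin (recv_rate P N pre x) (list_min (recv_rates P N (pre ++ [x]) (z :: r)))).
    apply Rmin_glb.
    + specialize (H [] x (z :: r)). rewrite app_nil_r in H. apply H; reflexivity.
    + apply IH. discriminate. intros l1 y l2 E.
      rewrite <- app_assoc. apply (H (x :: l1) y l2). rewrite E. reflexivity.
Qed.

Lemma recv_power_app P l1 l2 x : recv_power P (l1 ++ l2) x = recv_power P l1 x + recv_power P l2 x.
Proof. induction l1; simpl. lra. unfold recv_power in *. simpl. rewrite IHl1. lra. Qed.

Lemma recv_power_perm P l1 l2 x : Permutation l1 l2 -> recv_power P l1 x = recv_power P l2 x.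
Proof. intro H; induction H; unfold recv_power in *; simpl in *; lra. Qed.

Lemma recv_power_le P l x y : (forall m, In m l -> P m x <= P m y) -> recv_power P l x <= recv_power P l y.
Proof.
  induction l as [|m l IH]; intro H; unfold recv_power in *; simpl. lra.
  assert (H1 := H m (or_introl eq_refl)).
  assert (H2 : fold_right (fun m0 acc => P m0 x + acc) 0 l <= fold_right (fun m0 acc => P m0 y + acc) 0 l)
    by (apply IH; intros; apply H; right; auto).
  lra.
Qed.

Lemma recv_power_nonneg D P x : (forall i t, in_S D i -> in_S D t -> i <> t -> 0 < P i t) ->
  in_S D x -> forall l, (forall m, In m l -> in_S D m /\ m <> x) -> 0 <= recv_power P l x.
Proof.
  intros hP hx. induction l as [|m l IH]; intro H; unfold recv_power in *; simpl. lra.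
  destruct (H m (or_introl eq_refl)) as [Hm Hmx].
  assert (0 < P m x) by (apply hP; auto).
  assert (0 <= fold_right (fun m0 acc => P m0 x + acc) 0 l) by (apply IH; intros; apply H; right; auto).
  lra.
Qed.

Lemma rate_mono P N pre1 pre2 x y : 0 < N -> 0 <= recv_power P pre1 x ->
  recv_power P pre1 x <= recv_power P pre2 y -> recv_rate P N pre1 x <= recv_rate P N pre2 y.
Proof.
  intros hN H0 H1. unfold recv_rate.
  apply Rmult_le_compat_l. lra.
  assert (0 < / N) by (apply Rinv_0_lt_compat; lra).
  assert (0 <= / N * recv_power P pre1 x) by (apply Rmult_le_pos; lra).
  assert (/ N * recv_power P pre1 x <= / N * recv_power P pre2 y) by (apply Rmult_le_compat_l; lra).
  destruct (Rle_lt_or_eq_dec _ _ H3) as [Hl|He].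
  - left. apply ln_increasing; lra.
  - rewrite He. lra.
Qed.

Lemma key D P N pre1 pre2 extra x :
  (forall i t, in_S D i -> in_S D t -> i <> t -> 0 < P i t) -> 0 < N ->
  Permutation pre2 (pre1 ++ extra) ->
  (forall m, In m pre1 -> in_S D m /\ m <> x) ->
  (forall m, In m extra -> in_S D m /\ m <> x) -> in_S D x ->
  recv_rate P N pre1 x <= recv_rate P N pre2 x.
Proof.
  intros hP hN Hp H1 H2 hx. apply rate_mono; auto.
  apply (recv_power_nonneg D); auto.
  rewrite (recv_power_perm P _ _ x Hp), recv_power_app.
  assert (0 <= recv_power P extra x) by (apply (recv_power_nonneg D); auto). lra.
Qed.

Lemma skipn_nth_cons {A} : forall (l : list A) k d, (k < length l)%nat ->
  skipn k l = nth k l d :: skipn (S k) l.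
Proof.
  induction l as [|y l IH]; intros k d Hk. simpl in Hk; lia.
  destruct k. reflexivity. simpl. apply IH. simpl in Hk; lia.
Qed.

Theorem lemma2 (D : nat) (P : nat -> nat -> R) (N : R)
  (a b : list nat) (c : nat)
  (hD : (2 <= D)%nat)
  (hP : forall i t, in_S D i -> in_S D t -> i <> t -> 0 < P i t)
  (hN : 0 < N)
  (* M = (a_1^star, ..., a_L^star) is a route with a_1^star = 1, L >= 1 *)
  (ha_head : hd_error a = Some 1%nat)
  (ha_S : forall x, In x a -> in_S D x)
  (ha_nodup : NoDup a)
  (* for 1 <= k < L, a_{k+1}^star is a nearest neighbor w.r.t. (a_1^star,...,a_k^star) *)
  (ha_nn : forall k, (1 <= k < length a)%nat -> nearest_neighbor D P (firstn k a) (nth k a 0%nat))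
  (* b_1, ..., b_K distinct nodes not in M, K >= 1 *)
  (hK : (1 <= length b)%nat)
  (hb_S : forall x, In x b -> in_S D x)
  (hb_nodup : NoDup b)
  (hb_disj : forall x, In x b -> ~ In x a)
  (hb1 : ~ nearest_neighbor D P a (nth 0 b 0%nat))
  (* c = a_{L+1}^star is a nearest neighbor w.r.t. M *)
  (hc : nearest_neighbor D P a c) :
  (~ In c (firstn (length b - 1) b) ->
     R_DF P N (a ++ c :: firstn (length b - 1) b) >= R_DF P N (a ++ b)) /\
  (forall k, (k < length b - 1)%nat -> nth k b 0%nat = c ->
     R_DF P N (a ++ c :: (firstn k b ++ skipn (S k) b)) >= R_DF P N (a ++ b)).
Proof.
  destruct a as [|a1 a']; [discriminate|]. simpl in ha_head. injection ha_head as ->.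
  destruct hc as [hcS [hca hcnn]].
  destruct b as [|b1 bt] eqn:Eb; [simpl in hK; lia|]. rewrite <- Eb in *.
  set (v := R_DF P N ((1%nat :: a') ++ b)).
  assert (Hcr : recv_rate P N (1%nat :: a') b1 <= recv_rate P N (1%nat :: a') c).
  { destruct (Nat.eq_dec b1 c) as [->|Hne]. lra.
    assert (Hb1 : In b1 b) by (rewrite Eb; left; auto).
    apply rate_mono; auto.
    - apply (recv_power_nonneg D); auto. intros m Hm. split; auto.
      intro; subst; apply (hb_disj _ Hb1); auto.
    - apply recv_power_le. intros m Hm. apply Rge_le, (hcnn m b1); auto. }
  assert (Hpre : forall l r x, b = l ++ x :: r -> forall m, In m ((1%nat :: a') ++ l) -> in_S D m /\ m <> x).
  { intros l r x Hb m Hm. assert (Hx : In x b) by (rewrite Hb; apply in_or_app; right; left; auto).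
    apply in_app_or in Hm. destruct Hm as [Hm|Hm].
    - split; auto. intro; subst. apply (hb_disj _ Hx); auto.
    - split. apply hb_S. rewrite Hb. apply in_or_app; auto.
      intro; subst. rewrite Hb in hb_nodup. apply NoDup_remove_2 in hb_nodup.
      apply hb_nodup, in_or_app; auto. }
  assert (Hx_in_b : forall l r x, b = l ++ x :: r -> in_S D x).
  { intros l r x Hb. apply hb_S. rewrite Hb. apply in_or_app; right; left; auto. }
  assert (Gen : forall B2, (forall l x l2, B2 = l ++ x :: l2 ->
              v <= recv_rate P N ((1%nat :: a') ++ c :: l) x) ->
           R_DF P N ((1%nat :: a') ++ c :: B2) >= v).
  { intros B2 HB. apply Rle_ge. unfold v, R_DF. simpl.
    apply rates_min_ge. destruct a'; discriminate.
    intros l1 x l2 E. simpl. destruct (app_eq_app _ _ _ _ E) as [l [[E1 E2]|[E1 E2]]].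
    - destruct l as [|y l].
      + simpl in E2. injection E2 as -> ->. rewrite app_nil_r in E1. subst l1.
        eapply Rle_trans; [|exact Hcr]. rewrite Eb.
        change (1%nat :: a') with ([1%nat] ++ a'). apply rates_min_le.
      + simpl in E2. injection E2 as -> E2. subst a'.
        rewrite <- app_assoc. simpl. apply rates_min_le.
    - destruct l as [|y l].
      + simpl in E2. injection E2 as -> ->. rewrite app_nil_r in E1. subst l1.
        eapply Rle_trans; [|exact Hcr]. rewrite Eb.
        change (1%nat :: a') with ([1%nat] ++ a'). apply rates_min_le.
      + simpl in E2. injection E2 as -> E2. subst l1.
        specialize (HB _ _ _ E2). unfold v, R_DF in HB. simpl in HB |- *.
        exact HB. }
  split.
  - intros Hnc. apply Gen. intros l x l2 E.
    assert (Hb : b = l ++ x :: (l2 ++ skipn (length b - 1) b)).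
    { rewrite <- (firstn_skipn (length b - 1) b) at 1. rewrite E, <- app_assoc. reflexivity. }
    eapply Rle_trans.
    { unfold v, R_DF. simpl. rewrite Hb, app_assoc. apply rates_min_le. }
    apply (key D P N _ _ [c]); auto.
    + simpl. constructor. rewrite <- ?app_assoc. apply Permutation_app_head.
      apply Permutation_cons_append.
    + intros m Hm. apply (Hpre l _ x Hb). simpl in Hm |- *. exact Hm.
    + intros m [<-|[]]. split; auto. intro; subst. apply Hnc. rewrite E.
      apply in_or_app; right; left; auto.
    + eapply Hx_in_b; eauto.
  - intros k Hk Hnth. apply Gen. intros l x l2 E.
    assert (Hb0 : b = firstn k b ++ c :: skipn (S k) b).
    { rewrite <- Hnth. rewrite <- skipn_nth_cons by lia. symmetry. apply firstn_skipn. }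
    set (F := firstn k b) in *. set (T := skipn (S k) b) in *. clearbody F T.
    destruct (app_eq_app _ _ _ _ E) as [l0 [[E1 E2]|[E1 E2]]].
    + destruct l0 as [|y l0].
      * simpl in E2. rewrite app_nil_r in E1. subst F T.
        assert (Hb : b = (l ++ [c]) ++ x :: l2) by (rewrite Hb0, <- app_assoc; reflexivity).
        eapply Rle_trans.
        { unfold v, R_DF. simpl. rewrite Hb, app_assoc. apply rates_min_le. }
        apply (key D P N _ _ []); auto.
        -- rewrite app_nil_r. simpl. constructor. rewrite <- ?app_assoc.
           apply Permutation_app_head. apply Permutation_cons_append.
        -- intros m Hm. apply (Hpre _ _ x Hb). simpl in Hm |- *. rewrite <- ?app_assoc in *. exact Hm.
        -- intros m [].
        -- eapply Hx_in_b; eauto.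
      * simpl in E2. injection E2 as Exy E2. subst y F.
        assert (Hb : b = l ++ x :: (l0 ++ c :: T)) by (rewrite Hb0, <- app_assoc; reflexivity).
        eapply Rle_trans.
        { unfold v, R_DF. simpl. rewrite Hb, app_assoc. apply rates_min_le. }
        apply (key D P N _ _ [c]); auto.
        -- simpl. constructor. rewrite <- ?app_assoc. apply Permutation_app_head.
           apply Permutation_cons_append.
        -- intros m Hm. apply (Hpre _ _ x Hb). simpl in Hm |- *. exact Hm.
        -- intros m [<-|[]]. split; auto. intro; subst.
           rewrite Hb in hb_nodup. apply NoDup_remove_2 in hb_nodup.
           apply hb_nodup, in_or_app; right; apply in_or_app; right; left; auto.
        -- eapply Hx_in_b; eauto.
    + subst l T.
      assert (Hb : b = (F ++ c :: l0) ++ x :: l2) by (rewrite Hb0, <- app_assoc; reflexivity).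
      eapply Rle_trans.
      { unfold v, R_DF. simpl. rewrite Hb, app_assoc. apply rates_min_le. }
      apply (key D P N _ _ []); auto.
      -- rewrite app_nil_r. simpl. constructor. rewrite <- ?app_assoc. apply Permutation_app_head.
         simpl. apply Permutation_middle.
      -- intros m Hm. apply (Hpre _ _ x Hb). simpl in Hm |- *. rewrite <- ?app_assoc in *. exact Hm.
      -- intros m [].
      -- eapply Hx_in_b; eauto.
Qed.
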